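(* Let $(P,\le)$ be a poset and $i\in\{1,2,3\}$. If $(x_n)_{n\in\mathbb N}$ is a sequence in $P$ converging to a point $x\in P$ with respect to $\tau^\omega_{O_i}(P)$, then there exists a subsequence $(x_{n_k})_{k\in\mathbb N}$ that O$_i$-converges to $x$.
   Context: For monotone nets, $y_\gamma\uparrow y$ means increasing with supremum $y$, $z_\gamma\downarrow y$ decreasing with infimum $y$; $[a,b]:=\{t:a\le t\le b\}$; directed/filtered sets are nonempty sets in which finite subsets have upper/lower bounds in the set. A net $(x_\gamma)_{\gamma\in\Gamma}$ O$_1$-converges to $x$ if there are nets $(y_\gamma)_{\gamma\in\Gamma}$, $(z_\gamma)_{\gamma\in\Gamma}$ with eventually $y_\gamma\le x_\gamma\le z_\gamma$, $y_\gamma\uparrow x$, $z_\gamma\downarrow x$; it O$_2$-converges to $x$ if there are directed $M$ and filtered $N$ with $\sup M=\inf N=x$ such that for every $(m,n)\in M\times N$ the net is eventually in $[m,n]$; it O$_3$-converges to $x$ if the same holds with $M,N$ arbitrary subsets with $\sup M=\inf N=x$. A subset $X\subseteq P$ is O$^\omega_i$-closed if no sequence in $X$ O$_i$-converges to a point outside $X$; these sets are the closed sets of the topology $\tau^\omega_{O_i}(P)$. *)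

(* Defs.v *)
From mathcomp Require Import all_boot all_order.
Set Implicit Arguments. Unset Strict Implicit. Unset Printing Implicit Defensive.
Import Order.TTheory.
Local Open Scope order_scope.

Section OrderConv.
Context {d : Order.disp_t} {P : porderType d}.

Definition is_upper (M : P -> Prop) (u : P) := forall m, M m -> m <= u.
Definition is_lower (M : P -> Prop) (u : P) := forall m, M m -> u <= m.
Definition is_sup (M : P -> Prop) (x : P) :=
  is_upper M x /\ forall u, is_upper M u -> x <= u.
Definition is_inf (N : P -> Prop) (x : P) :=
  is_lower N x /\ forall u, is_lower N u -> u <= x.

(* directed: nonempty and every finite subset has an upper bound in the set
   (nonemptiness is the case of the empty finite subset) *)
Definition directed (M : P -> Prop) :=
  forall s : seq P, (forall m, m \in s -> M m) ->
    exists2 u, M u & forall m, m \in s -> m <= u.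
Definition filtered (N : P -> Prop) :=
  forall s : seq P, (forall m, m \in s -> N m) ->
    exists2 u, N u & forall m, m \in s -> u <= m.

Definition eventually (Q : nat -> Prop) := exists n0, forall n, (n0 <= n)%N -> Q n.

Definition incr_to (y : nat -> P) (x : P) :=
  (forall m n, (m <= n)%N -> y m <= y n) /\ is_sup (fun p => exists n, y n = p) x.
Definition decr_to (z : nat -> P) (x : P) :=
  (forall m n, (m <= n)%N -> z n <= z m) /\ is_inf (fun p => exists n, z n = p) x.

Inductive Okind := O1 | O2 | O3.

Definition Oconv (i : Okind) (x : nat -> P) (l : P) : Prop :=
  match i with
  | O1 => exists y z : nat -> P,
      eventually (fun n => y n <= x n /\ x n <= z n) /\ incr_to y l /\ decr_to z l
  | O2 => exists (M N : P -> Prop), directed M /\ filtered N /\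
      is_sup M l /\ is_inf N l /\
      forall m n, M m -> N n -> eventually (fun k => m <= x k /\ x k <= n)
  | O3 => exists (M N : P -> Prop),
      is_sup M l /\ is_inf N l /\
      forall m n, M m -> N n -> eventually (fun k => m <= x k /\ x k <= n)
  end.

Definition Oomega_closed (i : Okind) (X : P -> Prop) : Prop :=
  forall (s : nat -> P) (l : P), (forall n, X (s n)) -> Oconv i s l -> X l.

Definition Oomega_open (i : Okind) (U : P -> Prop) : Prop :=
  Oomega_closed i (fun p => ~ U p).

Definition tau_conv (i : Okind) (x : nat -> P) (l : P) : Prop :=
  forall U, Oomega_open i U -> U l -> eventually (fun n => U (x n)).

End OrderConv.

(* Main.v *)
Require Import Defs.
From mathcomp Require Import all_boot all_order.
From mathcomp Require Import zify.
From Stdlib Require Import Classical ClassicalEpsilon FunctionalExtensionality.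
Set Implicit Arguments. Unset Strict Implicit. Unset Printing Implicit Defensive.
Import Order.TTheory.

Definition incr (f : nat -> nat) := forall k, (f k < f k.+1)%N.

Lemma incr_mono f : incr f -> forall m n, (m <= n)%N -> (f m <= f n)%N.
Proof.
move=> hf m n; elim: n => [|n IH]; first by rewrite leqn0 => /eqP ->.
rewrite leq_eqVlt => /orP [/eqP -> //| hm].
have := IH hm; have := hf n; lia.
Qed.

Lemma incr_ge f : incr f -> forall k, (k <= f k)%N.
Proof. move=> hf; elim=> [|k IH]; first by []. have := hf k; lia. Qed.

Lemma incr_id : incr (fun k => k).
Proof. by move=> k. Qed.

Lemma incr_comp f g : incr f -> incr g -> incr (fun k => f (g k)).
Proof.
move=> hf hg k. have h := incr_mono hf (hg k). have := hf (g k). lia.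
Qed.

Lemma incr_shift f N : incr f -> incr (fun k => f k + N)%N.
Proof. move=> hf k; have := hf k; lia. Qed.

Lemma inf_or_ev (Q : nat -> Prop) :
  (forall N, exists n, (N <= n)%N /\ Q n) \/ (exists N, forall n, (N <= n)%N -> ~ Q n).
Proof.
destruct (classic (exists N, forall n, (N <= n)%N -> ~ Q n)) as [h|h]; [by right|left].
move=> N; apply: NNPP => hn; apply: h; exists N => n hn' q; apply: hn; by exists n.
Qed.

Lemma infsub (Q : nat -> Prop) : (forall N, exists n, (N <= n)%N /\ Q n) ->
  exists phi, incr phi /\ forall k, Q (phi k).
Proof.
move=> h.
pose g N := proj1_sig (constructive_indefinite_description _ (h N)).
have hg N : (N <= g N)%N /\ Q (g N) by rewrite /g; case: constructive_indefinite_description.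
pose fix phi k := match k with 0 => g 0 | k'.+1 => g (phi k').+1 end.
exists phi; split.
  by move=> k /=; case: (hg (phi k).+1).
by case=> [|k] /=; [case: (hg 0) | case: (hg (phi k).+1)].
Qed.

Lemma L5 (f : nat -> nat) :
  (exists v, forall N, exists n, (N <= n)%N /\ f n = v) \/
  (exists phi, incr phi /\ incr (fun k => f (phi k))).
Proof.
destruct (classic (exists v, forall N, exists n, (N <= n)%N /\ f n = v)) as [h|h]; [by left|right].
have hv v : exists N, forall n, (N <= n)%N -> f n <> v.
  case: (inf_or_ev (fun n => f n = v)) => // hh; case: h; by exists v.
have hB B : exists N, forall n, (N <= n)%N -> (B < f n)%N.
  elim: B => [|B [N1 h1]].
    case: (hv 0) => N hN; exists N => n hn; have := hN n hn; lia.
  case: (hv B.+1) => N2 h2; exists (maxn N1 N2) => n hn.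
  have := h1 n ltac:(lia); have := h2 n ltac:(lia); lia.
pose g B := proj1_sig (constructive_indefinite_description _ (hB B)).
have hg B : forall n, (g B <= n)%N -> (B < f n)%N by rewrite /g; case: constructive_indefinite_description.
pose fix phi k := match k with 0 => 0 | k'.+1 => maxn (g (f (phi k'))) (phi k').+1 end.
exists phi; split.
  move=> k /=; lia.
move=> k /=; apply: hg; lia.
Qed.

Section Ord.
Context {d : Order.disp_t} {P : porderType d}.
Local Open Scope order_scope.
Implicit Types (s : nat -> P) (q c : P).

Lemma ev_sub (Q : nat -> Prop) phi : incr phi -> eventually Q -> eventually (fun k => Q (phi k)).
Proof. move=> hf [n0 h]; exists n0 => k hk; apply: h; have := incr_ge hf k; lia. Qed.

Lemma ev_and (Q R : nat -> Prop) : eventually Q -> eventually R -> eventually (fun k => Q k /\ R k).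
Proof. move=> [a ha] [b hb]; exists (maxn a b) => k hk; split; [apply: ha|apply: hb]; lia. Qed.

Lemma ev_ex (Q : nat -> Prop) : eventually Q -> exists k, Q k.
Proof. move=> [a ha]; exists a; exact: ha. Qed.

Lemma Oconv_sub i s q phi : incr phi -> Oconv i s q -> Oconv i (fun k => s (phi k)) q.
Proof.
move=> hf; case: i => /=.
- move=> [y [z [hev [[hy [hyu hyl]] [hz [hzl hzu]]]]]].
  exists (fun k => y (phi k)), (fun k => z (phi k)); split; first exact: (ev_sub (Q := fun n => y n <= s n /\ s n <= z n)).
  split; split.
  + by move=> m n hmn; apply: hy; apply: incr_mono.
  + split; first by move=> p [n <-]; apply: hyu; exists (phi n).
    move=> u hu; apply: hyl => p [n <-]; apply: le_trans (hy _ _ (incr_ge hf n)) _.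
    by apply: hu; exists n.
  + by move=> m n hmn; apply: hz; apply: incr_mono.
  + split; first by move=> p [n <-]; apply: hzl; exists (phi n).
    move=> u hu; apply: hzu => p [n <-]; apply: le_trans _ (hz _ _ (incr_ge hf n)).
    by apply: hu; exists n.
- move=> [M [N [h1 [h2 [h3 [h4 h5]]]]]]; exists M, N; do 4 (split; first done).
  by move=> m n hm hn; apply: (ev_sub (Q := fun k => m <= s k /\ s k <= n)) => //; apply: h5.
- move=> [M [N [h3 [h4 h5]]]]; exists M, N; do 2 (split; first done).
  by move=> m n hm hn; apply: (ev_sub (Q := fun k => m <= s k /\ s k <= n)) => //; apply: h5.
Qed.

Lemma Oconv_ext i s t q : (forall n, s n = t n) -> Oconv i s q -> Oconv i t q.
Proof. by move=> h; have -> : s = t by apply: functional_extensionality. Qed.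

Lemma single_sup c : is_sup (fun p => p = c) c.
Proof. by split; [move=> p ->| move=> u hu; apply: hu]. Qed.
Lemma single_inf c : is_inf (fun p => p = c) c.
Proof. by split; [move=> p ->| move=> u hu; apply: hu]. Qed.

Lemma Oconv_const i s c : (forall n, s n = c) -> Oconv i s c.
Proof.
move=> hs; case: i => /=.
- exists (fun _ => c), (fun _ => c); split; first by exists 0%N => n _; rewrite hs.
  split; split=> //.
  + split; first by move=> p [n <-].
    by move=> u hu; apply: hu; exists 0%N.
  + split; first by move=> p [n <-].
    by move=> u hu; apply: hu; exists 0%N.
- exists (fun p => p = c), (fun p => p = c); split.
    by move=> l hl; exists c => // m hm; rewrite (hl m hm).
  split; first by move=> l hl; exists c => // m hm; rewrite (hl m hm).
  split; first exact: single_sup. split; first exact: single_inf.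
  by move=> m n -> ->; exists 0%N => k _; rewrite hs.
- exists (fun p => p = c), (fun p => p = c).
  split; first exact: single_sup. split; first exact: single_inf.
  by move=> m n -> ->; exists 0%N => k _; rewrite hs.
Qed.

Definition top q := forall u, u <= q.
Definition bot q := forall u, q <= u.
Definition Good (i : Okind) q := match i with O3 => ~ top q /\ ~ bot q | _ => True end.

Definition Wconv s q := exists M N : P -> Prop, (exists m, M m) /\ (exists n, N n) /\
  is_sup M q /\ is_inf N q /\
  forall m n, M m -> N n -> eventually (fun k => m <= s k /\ s k <= n).

Lemma W1 i s q : Oconv i s q -> Good i q -> Wconv s q.
Proof.
case: i => /=.
- move=> [y [z [[n0 hev] [[hy hys] [hz hzi]]]]] _.
  exists (fun p => exists n, y n = p), (fun p => exists n, z n = p).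
  split; first by exists (y 0%N), 0%N.
  split; first by exists (z 0%N), 0%N.
  do 2 (split; first done).
  move=> m n [a <-] [b <-]; exists (maxn n0 (maxn a b)) => k hk.
  have [h1 h2] := hev k ltac:(lia).
  split; [apply: le_trans (hy a k ltac:(lia)) h1 | apply: le_trans h2 (hz b k ltac:(lia))].
- move=> [M [N [hM [hN [h3 [h4 h5]]]]]] _; exists M, N.
  have [m hm _] := hM [::] ltac:(done).
  have [n hn _] := hN [::] ltac:(done).
  split; first by exists m. split; first by exists n. done.
- move=> [M [N [h3 [h4 h5]]]] [nt nb]; exists M, N.
  split.
    apply: NNPP => hm; apply: nb => u; apply: h3.2 => m hm'; case: hm; by exists m.
  split.
    apply: NNPP => hn; apply: nt => u; apply: h4.2 => m hm'; case: hn; by exists m.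
  done.
Qed.

Lemma W2le s q q' : Wconv s q -> Wconv s q' -> q <= q'.
Proof.
move=> [M [N [_ [[n0 hn0] [hM [_ h]]]]]] [M' [N' [[m0 hm0] [_ [_ [hN' h']]]]]].
apply: hN'.2 => n' hn'; apply: hM.2 => m hm.
have [k [[hk1 _] [_ hk2]]] := ev_ex (ev_and (h m n0 hm hn0) (h' m0 n' hm0 hn')).
exact: le_trans hk1 hk2.
Qed.

Lemma W2 s q q' : Wconv s q -> Wconv s q' -> q = q'.
Proof. by move=> h h'; apply/le_anti/andP; split; [apply: W2le h h'|apply: W2le h' h]. Qed.

Lemma W3 s c : (forall n, s n = c) -> Wconv s c.
Proof.
move=> hs; exists (fun p => p = c), (fun p => p = c).
split; first by exists c. split; first by exists c.
split; first exact: single_sup. split; first exact: single_inf.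
by move=> m n -> ->; exists 0%N => k _; rewrite hs.
Qed.

Lemma W4 s q phi : incr phi -> Wconv s q -> Wconv (fun k => s (phi k)) q.
Proof.
move=> hf [M [N [h1 [h2 [h3 [h4 h5]]]]]]; exists M, N; do 4 (split; first done).
by move=> m n hm hn; apply: (ev_sub (Q := fun k => m <= s k /\ s k <= n)) => //; apply: h5.
Qed.

Definition WClosed (F : P -> Prop) := forall s q, (forall n, F (s n)) -> Wconv s q -> F q.

Lemma WClosed_union F G : WClosed F -> WClosed G -> WClosed (fun q => F q \/ G q).
Proof.
move=> hF hG s q hs hw.
case: (inf_or_ev (fun n => F (s n))) => [h|[N hN]].
  have [phi [hphi hq]] := infsub h; left; apply: (hF (fun k => s (phi k))) => //.
  exact: W4.
right; apply: (hG (fun k => s (k + N)%N)); last by apply: W4 => //; apply: (incr_shift N incr_id).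
move=> n; case: (hs (n + N)%N) => // hf; case: (hN (n + N)%N) => //; lia.
Qed.

Lemma WClosed_single c : WClosed (fun q => q = c).
Proof. move=> s q hs hw; apply: W2 hw (W3 hs). Qed.

Lemma WClosed_top : WClosed top.
Proof.
move=> s q hs hw.
have e : forall n, s n = s 0%N by move=> n; apply/le_anti/andP; split; [apply: hs|apply: hs].
by rewrite (WClosed_single e hw).
Qed.

Lemma WClosed_bot : WClosed bot.
Proof.
move=> s q hs hw.
have e : forall n, s n = s 0%N by move=> n; apply/le_anti/andP; split; [apply: hs|apply: hs].
by rewrite (WClosed_single e hw).
Qed.

Lemma WClosed_Bad i : WClosed (fun q => ~ Good i q).
Proof.
case: i => /=; try by move=> s q hs; case: (hs 0%N).
move=> s q hs hw [nt nb].
have h : forall n, top (s n) \/ bot (s n).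
  move=> n; apply: NNPP => hn; apply: (hs n); split => h; apply: hn; by [left|right].
by case: (WClosed_union WClosed_top WClosed_bot h hw).
Qed.

Lemma closedX i (y : nat -> P) (K : nat) (F : P -> Prop) :
  (forall phi, incr phi -> forall q, Good i q -> Oconv i (fun k => y (phi k)) q -> F q) ->
  WClosed F -> (forall q, ~ Good i q -> F q) ->
  Oomega_closed i (fun p => (exists k, (K <= k)%N /\ p = y k) \/ F p).
Proof.
move=> H1 HF HB s q hs hc.
destruct (classic (Good i q)) as [G|NG]; last by right; apply: HB.
have W := W1 hc G.
case: (inf_or_ev (fun n => F (s n))) => [h|[N hN]].
  have [phi [hphi hq]] := infsub h; right; apply: (HF (fun k => s (phi k))) => //.
  exact: W4.
have hex : forall n, exists k, (K <= k)%N /\ s (n + N)%N = y k.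
  move=> n; case: (hs (n + N)%N) => // hf; case: (hN (n + N)%N) => //; lia.
pose f n := proj1_sig (constructive_indefinite_description _ (hex n)).
have hf n : (K <= f n)%N /\ s (n + N)%N = y (f n).
  by rewrite /f; case: constructive_indefinite_description.
case: (L5 f) => [[v hv]|[phi [hphi hfphi]]].
  have [phi [hphi hq]] := infsub hv.
  have W' := W4 (incr_shift N hphi) W.
  have e : forall k, s (phi k + N)%N = y v by move=> k; rewrite (hf _).2 hq.
  have := W2 W' (W3 e) => ->; left; exists v; split => //.
  by have := (hf (phi 0%N)).1; rewrite hq.
right; apply: (H1 _ hfphi) => //.
apply: (Oconv_ext (s := fun k => s (phi k + N)%N)); first by move=> k; rewrite (hf _).2.
exact: Oconv_sub (incr_shift N hphi) hc.
Qed.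

Lemma final i (x : nat -> P) (l : P) psi (F : P -> Prop) K0 :
  tau_conv i x l -> incr psi ->
  (forall phi, incr phi -> forall q, Good i q -> Oconv i (fun k => x (psi (phi k))) q -> F q) ->
  WClosed F -> (forall q, ~ Good i q -> F q) -> ~ F l ->
  (forall n, (K0 <= n)%N -> x n <> l) -> False.
Proof.
move=> Ht hpsi H1 HF HB nFl hK.
pose X := fun p => (exists k, (K0 <= k)%N /\ p = x (psi k)) \/ F p.
have cX : Oomega_closed i X by apply: closedX.
have oU : Oomega_open i (fun p => ~ X p).
  move=> s q hs hc nX; apply: nX; apply: cX hc => n; apply: NNPP; exact: hs.
have Ul : ~ X l.
  case=> [[k [hk e]]|//]; apply: (hK (psi k)); last by rewrite e.
  have := incr_ge hpsi k; lia.
have [N hN] := Ht _ oU Ul.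
apply: (hN (psi (N + K0)%N)); first by have := incr_ge hpsi (N + K0)%N; lia.
left; exists (N + K0)%N; split => //; lia.
Qed.

End Ord.

Theorem mainTheorem4 (d : Order.disp_t) (P : porderType d) (i : Okind)
  (x : nat -> P) (l : P) :
  tau_conv i x l ->
  exists phi : nat -> nat, (forall k, (phi k < phi k.+1)%N) /\
    Oconv i (fun k => x (phi k)) l.
Proof.
move=> Ht.
destruct (classic (exists phi : nat -> nat, (forall k, (phi k < phi k.+1)%N) /\
    Oconv i (fun k => x (phi k)) l)) as [h|H]; first exact: h.
exfalso.
have Gl : Good i l.
  apply: NNPP => nG; apply: H; exists (fun k => k); split => // .
  move: nG; clear Ht; case: i => //= nG.
  have [ht|hb] : top l \/ bot l.
    apply: NNPP => hn; apply: nG; split => h; apply: hn; by [left|right].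
    exists (fun p => p = l), (fun _ => False); split; first exact: single_sup.
    by split=> //; split=> // u _; apply: ht.
  exists (fun _ => False), (fun p => p = l); split; last by split; first exact: single_inf.
  by split=> // u _; apply: hb.
case: (inf_or_ev (fun n => x n = l)) => [h|[K0 hK0]].
  have [phi [hphi hq]] := infsub h; apply: H; exists phi; split => //.
  exact: Oconv_const.
destruct (classic (exists psi p, incr psi /\ Good i p /\ Oconv i (fun k => x (psi k)) p))
  as [[psi [p [hpsi [Gp cp]]]]|NB].
  apply: (@final _ _ i x l psi (fun q => q = p \/ ~ Good i q) K0 Ht hpsi _ _ _ _ hK0) => //.
  - move=> phi hphi q Gq cq; left.
    exact: W2 (W1 cq Gq) (W1 (Oconv_sub hphi cp) Gp).
  - apply: (WClosed_union (F := fun q => q = p) (G := fun q => ~ Good i q)).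
      exact: WClosed_single.
    exact: WClosed_Bad.
  - by move=> q nq; right.
  - case=> [e|//]; apply: H; exists psi; split => //; by rewrite -e in cp.
apply: (@final _ _ i x l (fun k => k) (fun q => ~ Good i q) K0 Ht incr_id _ _ _ _ hK0) => //.
- move=> phi hphi q Gq cq; case: NB; by exists phi, q.
- exact: WClosed_Bad.
Qed.
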